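(* For $j\in\mathbb{N}$ let $G_j(v)=\frac{v^j}{1-e^{-v}}$ ($v\ne0$, extended analytically at $0$) and $\mathfrak{g}_j(v)=(e^v-1)^{j+1}G_j^{(j)}(v)$. Then the Maclaurin power series of $\mathfrak{g}_j$ is \[ \mathfrak{g}_j(v)=(j+1)!\sum_{k=0}^\infty C(j,k)\frac{v^k}{k!}, \] where \[ C(j,k)=k!\sum_{r=0}^{k}(-1)^{r+1}(r+1)(r+2)(r+j)!\,\frac{S(k-r,j+1)}{(k-r)!}\sum_{q=0}^{r+1}\frac{(-1)^q}{q+1}\,\frac{S(r+q+1,q)}{(r-q+1)!\,(r+q+1)!}. \]
   Context: $\mathbb{N}=\{1,2,3,\dots\}$. $S(n,k)$ denotes the Stirling numbers of the second kind, defined by $\frac{(e^v-1)^k}{k!}=\sum_{n=k}^\infty S(n,k)\frac{v^n}{n!}$, with $S(n,k)=0$ for $n<k$. *)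

(* Defs.v *)
From Stdlib Require Import Reals Arith Factorial.
From Coquelicot Require Import Coquelicot.
Open Scope R_scope.

(* Stirling numbers of the second kind S(n,k), via the standard recurrence
   S(0,0)=1, S(0,k+1)=0, S(n+1,0)=0, S(n+1,k+1)=(k+1)S(n,k+1)+S(n,k),
   which is equivalent to the EGF (e^v-1)^k/k! = sum_n S(n,k) v^n/n!. *)
Fixpoint stirling2 (n k : nat) : nat :=
  match n, k with
  | O, O => 1%nat
  | O, S _ => 0%nat
  | S _, O => 0%nat
  | S n', S k' => (S k' * stirling2 n' (S k') + stirling2 n' k')%nat
  end.

(* G_j(v) = v^j / (1 - e^{-v}) for v <> 0, extended analytically at 0
   (limit at 0 is 1 if j = 0 and 0 if j >= 1). *)
Definition G (j : nat) (v : R) : R :=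
  if Req_EM_T v 0 then (match j with O => 1 | _ => 0 end)
  else v ^ j / (1 - exp (- v)).

Definition gfrak (j : nat) (v : R) : R :=
  (exp v - 1) ^ (S j) * Derive_n (G j) j v.

Definition Ccoef (j k : nat) : R :=
  INR (fact k) *
  sum_n (fun r =>
    (-1) ^ (S r) * INR (S r) * INR (S (S r)) * INR (fact (r + j))
    * INR (stirling2 (k - r) (S j)) / INR (fact (k - r))
    * sum_n (fun q =>
        (-1) ^ q / INR (S q)
        * INR (stirling2 (r + q + 1) q)
        / (INR (fact (r - q + 1)) * INR (fact (r + q + 1))))
      (S r))
  k.

(* Main.v *)
Require Import Defs.
From Stdlib Require Import Reals Arith Factorial Lra Lia.
From Coquelicot Require Import Coquelicot.
Open Scope R_scope.

Definition fcoef (m : nat) : R := / INR (fact (S m)).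
Definition em1 : nat -> R := PS_incr_1 fcoef.
Fixpoint pw (n : nat) : nat -> R :=
  match n with O => em1 | S n' => PS_mult (pw n') em1 end.
Definition betac (n : nat) : R :=
  INR (fact (S n)) * sum_n (fun q => (-1)^q / INR (S q) * INR (stirling2 (n+q) q)
       / (INR (fact (n-q)) * INR (fact (n+q)))) n.

Lemma em1_0 : em1 0 = 0. Proof. reflexivity. Qed.
Lemma em1_S m : em1 (S m) = fcoef m. Proof. reflexivity. Qed.

Module MC.
From mathcomp Require Import all_boot all_order all_algebra.
From mathcomp Require Import Rstruct.
From mathcomp Require Import ring.
From mathcomp Require Import zify.
Import Order.TTheory GRing.Theory Num.Theory.
Local Open Scope ring_scope.

Ltac nz := repeat (apply/andP; split); rewrite ?nat1r ?natr1 -?natrM -?natrD ?nat1r ?natr1 -?natrM -?natrD pnatr_eq0 -?lt0n ?addn_gt0 ?muln_gt0 ?fact_gt0 ?orbT //.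

Lemma sum_n_big (f : nat -> R) n : sum_n f n = \sum_(i < n.+1) f i.
Proof.
elim: n => [|n IH]; first by rewrite sum_O big_ord_recr big_ord0 /= add0r.
by rewrite sum_Sn IH [in RHS]big_ord_recr.
Qed.

Lemma fact_neq0 n : (n`!)%:R != 0 :> R.
Proof. by rewrite pnatr_eq0 -lt0n fact_gt0. Qed.

Lemma fcoefE m : fcoef m = (m.+1`!)%:R^-1.
Proof. by rewrite /fcoef RinvE INRE factE. Qed.

Definition Phi (M : nat) : {poly R} := \poly_(i < M) fcoef i.
Definition E M : {poly R} := 'X * Phi M.

Lemma coefE_em1 M i : (i <= M)%N -> (E M)`_i = em1 i.
Proof.
rewrite /E coefXM; case: i => [|i] //= Hi.
by rewrite coef_poly Hi.
Qed.


Lemma coefM_congr (p q q' : {poly R}) i :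
  (forall l, (l <= i)%N -> q`_l = q'`_l) -> (p * q)`_i = (p * q')`_i.
Proof. by move=> H; rewrite !coefM; apply: eq_bigr => j _; rewrite H // leq_subr. Qed.

Lemma pw_E n M m : (m <= M)%N -> pw n m = ((E M) ^+ n.+1)`_m.
Proof.
elim: n m => [|n IH] m Hm; first by rewrite expr1 coefE_em1.
rewrite /= /PS_mult sum_f_R0E big_mkord exprSr coefM.
apply: eq_bigr => [[k Hk]] _ /=.
rewrite RmultE IH ?coefE_em1 //.
  exact: leq_trans (leq_subr _ _) Hm.
by apply: leq_trans Hm; rewrite -ltnS.
Qed.

Lemma dE M i : (i < M)%N -> ((E M)^`())`_i = (1 + E M)`_i.
Proof.
move=> Hi; rewrite coef_deriv coefD coef1 (@coefE_em1 M i.+1 Hi) (@coefE_em1 M i (ltnW Hi)) em1_S.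
case: i Hi => [|i] Hi.
  by rewrite fcoefE em1_0 addr0 mulr1n invr1.
rewrite em1_S !fcoefE add0r -mulr_natr (factS i.+1) natrM.
by field; rewrite fact_neq0 /= -natrD pnatr_eq0.
Qed.

Lemma E_rec M q i : (i < M)%N ->
  (i.+1)%:R * ((E M) ^+ q.+1)`_i.+1 = (q.+1)%:R * (((E M) ^+ q)`_i + ((E M) ^+ q.+1)`_i).
Proof.
move=> Hi.
have := coef_deriv ((E M) ^+ q.+1) i.
rewrite deriv_exp /= coefMn mulrC => H.
rewrite mulr_natl -H mulr_natl.
congr (_ *+ _).
rewrite (@coefM_congr _ _ (1 + E M)); last first.
  move=> l Hl; apply: dE; exact: leq_ltn_trans Hl Hi.
by rewrite mulrDr mulr1 -exprSr coefD.
Qed.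

Definition st (q i : nat) : R := (q`!)%:R * (stirling2 i q)%:R / (i`!)%:R.

Lemma E_st M q i : (i <= M)%N -> ((E M) ^+ q)`_i = st q i.
Proof.
elim: q i => [|q IHq] i.
  rewrite expr0 coef1 /st; case: i => [|i] _.
    by rewrite (_ : stirling2 0 0 = 1%N) // RdivE RmultE mulr1 divff // fact_neq0.
  by rewrite (_ : stirling2 i.+1 0 = 0%N) // RdivE RmultE mulr0 mul0r.
elim: i => [|i IHi] Hi.
  rewrite exprSr coef0M coefE_em1 // em1_0 mulr0 /st.
  by rewrite (_ : stirling2 0 q.+1 = 0%N) // RdivE RmultE mulr0 mul0r.
have Hi' : (i < M)%N by [].
have := @E_rec M q i Hi'.
rewrite IHq ?IHi 1?ltnW //.
move=> H.
have Hn : (i.+1)%:R != 0 :> R by rewrite pnatr_eq0.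
apply: (mulfI Hn); rewrite H /st !RdivE !RmultE.
rewrite -[(q.+1)`!]/(q.+1 * q`!)%N -[(i.+1)`!]/(i.+1 * i`!)%N.
rewrite -[stirling2 i.+1 q.+1]/(q.+1 * stirling2 i q.+1 + stirling2 i q)%N.
rewrite !natrD !natrM.
by field; nz.
Qed.


Definition T M n : {poly R} := \sum_(q < n.+1) ((- Phi M) ^+ q *+ 'C(n.+1, q.+1)).

Lemma Phi0 M : (0 < M)%N -> (Phi M)`_0 = 1.
Proof. by move=> H; rewrite coef_poly H fcoefE (_ : 1`! = 1%N) // invr1. Qed.

Lemma L3 M n : Phi M * T M n = 1 - (1 - Phi M) ^+ n.+1.
Proof.
rewrite exprDn big_ord_recl /= expr0 expr1n mul1r bin0 mulr1n.
rewrite opprD addrA subrr add0r /T mulr_sumr -sumrN.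
apply: eq_bigr => i _.
by rewrite /bump leq0n add1n expr1n mul1r mulrnAr exprS mulNr mulNrn opprK.
Qed.

Lemma L4 M n m : (0 < M)%N -> (m <= n)%N -> ((1 - Phi M) ^+ n.+1)`_m = 0.
Proof.
move=> HM Hm.
have : root (1 - Phi M) 0 by rewrite rootE horner_coef0 coefB coef1 Phi0 // subrr.
move/factor_theorem => [Q ->].
by rewrite subr0 exprMn coefMXn ltnS Hm.
Qed.

Lemma L6 M n m : (0 < M)%N -> (m <= n)%N -> (T M n)`_m = (T M m)`_m.
Proof.
move=> HM Hmn.
have H0 : forall i, (i <= m)%N -> (Phi M * (T M n - T M m))`_i = 0.
  move=> i Hi; rewrite mulrBr coefB !L3 !coefB L4 // ?L4 //.
    by rewrite subrr.
  exact: leq_trans Hi Hmn.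
suff : forall i, (i <= m)%N -> (T M n - T M m)`_i = 0.
  by move/(_ m (leqnn m))/eqP; rewrite coefB subr_eq0 => /eqP.
elim/ltn_ind => i IH Hi.
have := H0 i Hi; rewrite coefM big_ord_recl Phi0 // mul1r subn0.
rewrite big1 ?addr0 //.
move=> [j Hj] _ /=; rewrite /bump leq0n add1n IH ?mulr0 //; lia.
Qed.

Lemma L2 M q m : (m + q <= M)%N -> (Phi M ^+ q)`_m = st q (m + q).
Proof.
move=> H; rewrite -(@E_st M q (m + q) H) /E exprMn coefXnM.
have -> : (m + q < q)%N = false by lia.
by rewrite addnK.
Qed.

Lemma coef_Nexp (p : {poly R}) q i : ((- p) ^+ q)`_i = (-1) ^+ q * (p ^+ q)`_i.
Proof.
by rewrite -scaleN1r exprZn coefZ.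
Qed.


Lemma Rm1E : IZR (-1) = -1 :> R.
Proof. by []. Qed.

Lemma L5 M n : (n + n <= M)%N -> (T M n)`_n = betac n.
Proof.
move=> HM.
rewrite /T coef_sum /betac sum_n_big RmultE mulr_sumr.
apply: eq_bigr => i _; have Hq := ltn_ord i; move: (nat_of_ord i) Hq => q Hq.
rewrite coefMn coef_Nexp L2; last by lia.
rewrite /st !(RmultE, RdivE, RpowE, INRE, factE, Rm1E, plusE, minusE).
rewrite -(bin_fact Hq) subSS -mulr_natr -[(q.+1)`!]/(q.+1 * q`!)%N !natrM.
by field; nz.
Qed.


Lemma MC1 n m : pw n m = INR (fact (S n)) * INR (stirling2 m (S n)) / INR (fact m).
Proof.
by rewrite (@pw_E n m m) // E_st // /st !(RmultE, RdivE, INRE, factE).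
Qed.

Lemma MC2 m : PS_mult fcoef betac m = if m is O then R1 else R0.
Proof.
rewrite /PS_mult sum_f_R0E big_mkord.
pose M := (m + m).+1.
have HM : (0 < M)%N by [].
transitivity ((Phi M * T M m)`_m).
  rewrite coefM; apply: eq_bigr => i _; have Hi := ltn_ord i.
  move: (nat_of_ord i) Hi => i' Hi.
  rewrite RmultE coef_poly (_ : (i' < M)%N); last by rewrite /M; lia.
  rewrite (@L6 M m (m - i')) //; last by lia.
  rewrite L5 // /M; lia.
rewrite L3 coefB L4 // subr0 coef1.
by case: m {M HM}.
Qed.


Lemma geo n : \sum_(i < n) (2%:R : R) ^+ (n - i.+1) = 2%:R ^+ n - 1.
Proof.
elim: n => [|n IH]; first by rewrite big_ord0 expr0 subrr.
rewrite big_ord_recr /= subnn expr0.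
rewrite (eq_bigr (fun i : 'I_n => 2%:R * (2%:R : R) ^+ (n - i.+1))); last first.
  by move=> i _; rewrite subSS -exprS subnSK.
by rewrite -mulr_sumr IH exprS; ring.
Qed.

Lemma fcoef_bd i : 0 <= fcoef i <= 1.
Proof.
have H : 0 < ((i.+1)`!)%:R :> R by rewrite ltr0n fact_gt0.
rewrite fcoefE invr_ge0 (ltW H) /= invf_le1 // ler1n fact_gt0 //.
Qed.

Lemma fcoef0 : fcoef 0 = 1.
Proof. by rewrite fcoefE (_ : 1`! = 1%N) // invr1. Qed.

Lemma beta_bd n : `|betac n| <= 2 ^+ n.
Proof.
elim/ltn_ind: n => n IH.
have := MC2 n.
rewrite /PS_mult sum_f_R0E big_mkord big_ord_recl /= ?subn0 RmultE fcoef0 mul1r.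
case: n IH => [|n] IH.
  by rewrite big_ord0 addr0 => ->; rewrite expr0 normr1.
move/eqP; rewrite addr_eq0 => /eqP ->; rewrite normrN.
apply: le_trans (ler_norm_sum _ _ _) _.
apply: (@le_trans _ _ (\sum_(i < n.+1) (2%:R : R) ^+ (n.+1 - i.+1))).
  apply: ler_sum => i _; rewrite /bump leq0n add1n RmultE normrM.
  rewrite -[X in _ <= X]mul1r; apply: ler_pM => //.
    by rewrite ger0_norm; case/andP: (fcoef_bd i.+1).
  apply: IH; have := ltn_ord i; lia.
by rewrite geo gerBl.
Qed.


Lemma beta_bdR n : Rle (Rabs (betac n)) (pow 2 n).
Proof.
apply/RleP; rewrite RabsE RpowE.
by have := beta_bd n.
Qed.

End MC.

Lemma MC1' n m : pw n m = INR (fact (S n)) * INR (stirling2 m (S n)) / INR (fact m).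
Proof. exact (MC.MC1 n m). Qed.

Lemma ex_bounded (a : nat -> R) y : ex_pseries a y -> exists M, forall n, Rabs (a n * y^n) <= M.
Proof.
intros H.
apply ex_series_lim_0 in H.
apply is_lim_seq_abs in H.
simpl in H. rewrite Rabs_R0 in H.
apply is_lim_seq_Reals in H.
assert (Hc := CV_Cauchy _ (exist _ 0 H)).
destruct (cauchy_bound _ Hc) as [M HM].
exists M. intros n. apply HM. exists n.
rewrite Rmult_comm, <- pow_n_pow. reflexivity.
Qed.

Lemma radius_bd (a : nat -> R) (y : R) :
  (exists M, forall n, Rabs (a n * y^n) <= M) -> Rbar_le y (CV_radius a).
Proof.
intros H. destruct (CV_radius_bounded a) as [Hub _]. apply Hub. exact H.
Qed.

Lemma radius_inf (a : nat -> R) : (forall y, 0 < y -> ex_pseries a y) ->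
  forall x, Rbar_lt (Rabs x) (CV_radius a).
Proof.
intros H x.
assert (Hy : 0 < Rabs x + 1) by (generalize (Rabs_pos x); lra).
apply Rbar_lt_le_trans with (Rabs x + 1).
- simpl; lra.
- apply radius_bd, ex_bounded, H; exact Hy.
Qed.

Lemma em1_is x : is_pseries em1 x (exp x - 1).
Proof.
unfold is_pseries.
apply is_series_decr_1.
apply (is_series_incr_1 (fun k => scal (pow_n x k) (/ INR (fact k)))).
match goal with |- is_series _ ?l => replace l with (exp x) end.
- apply is_exp_Reals.
- unfold em1, PS_incr_1, scal, zero, opp, plus; simpl; unfold mult, one; simpl.
  rewrite Rinv_1. ring.
Qed.

Lemma ex_all_radius (a : nat -> R) (f : R -> R) : (forall x, is_pseries a x (f x)) ->
  forall x, Rbar_lt (Rabs x) (CV_radius a).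
Proof.
intros H. apply radius_inf. intros y _. eexists. apply H.
Qed.

Lemma pw_is n : forall x, is_pseries (pw n) x ((exp x - 1) ^ (S n)).
Proof.
induction n as [|n IH]; intros x.
- simpl. rewrite Rmult_1_r. apply em1_is.
- simpl pw.
  replace ((exp x - 1) ^ S (S n)) with ((exp x - 1) ^ S n * (exp x - 1)) by (simpl; ring).
  apply is_pseries_mult.
  + apply IH.
  + apply em1_is.
  + apply (ex_all_radius _ _ IH).
  + apply (ex_all_radius _ _ em1_is).
Qed.

Lemma pw_radius n x : Rbar_lt (Rabs x) (CV_radius (pw n)).
Proof. apply (ex_all_radius _ _ (pw_is n)). Qed.

Lemma pw_val n x : PSeries (pw n) x = (exp x - 1) ^ (S n).
Proof. apply is_pseries_unique, pw_is. Qed.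

Lemma fcoef_radius x : Rbar_lt (Rabs x) (CV_radius fcoef).
Proof.
apply radius_inf. intros y Hy.
apply (ex_pseries_decr_1 em1 y).
- right. exists (/ y). unfold mult, one; simpl. field. lra.
- eexists. apply em1_is.
Qed.

Lemma F_val x : exp x - 1 = x * PSeries fcoef x.
Proof.
rewrite <- (is_pseries_unique _ _ _ (em1_is x)).
unfold em1. apply PSeries_incr_1.
Qed.

Lemma betac_radius : Rbar_le (/2) (CV_radius betac).
Proof.
apply radius_bd. exists 1. intros n.
rewrite Rabs_mult, <- RPow_abs.
rewrite (Rabs_right (/2)) by lra.
apply Rle_trans with (2 ^ n * (/2) ^ n).
- apply Rmult_le_compat_r. apply pow_le; lra. apply MC.beta_bdR.
- rewrite <- Rpow_mult_distr. replace (2 * / 2) with 1 by field. rewrite pow1. lra.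
Qed.

Definition delta (m : nat) : R := match m with O => R1 | S _ => R0 end.

Lemma PSeries_delta x : ex_pseries delta x -> PSeries delta x = 1.
Proof.
intros H. rewrite PSeries_decr_1 by exact H.
rewrite (PSeries_ext (PS_decr_1 delta) (fun _ => 0)) by (intros; reflexivity).
rewrite PSeries_const_0. simpl. ring.
Qed.

Lemma FB x : Rabs x < /2 -> PSeries fcoef x * PSeries betac x = 1.
Proof.
intros Hx.
assert (Hb : Rbar_lt (Rabs x) (CV_radius betac)).
{ apply Rbar_lt_le_trans with (/2). simpl; lra. apply betac_radius. }
rewrite <- PSeries_mult by (try apply fcoef_radius; exact Hb).
rewrite (PSeries_ext _ delta) by (intros n; rewrite MC.MC2; destruct n; reflexivity).
apply PSeries_delta.
apply ex_series_ext with (fun k => scal (pow_n x k) (PS_mult fcoef betac k)).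
- intros n. rewrite MC.MC2. destruct n; reflexivity.
- apply ex_pseries_mult. apply fcoef_radius. exact Hb.
Qed.

Definition bs (n : nat) : R := (-1) ^ n * betac n.
Definition acoef (j : nat) : nat -> R := PS_incr_n bs (j - 1).

Lemma Bneg v : PSeries bs v = PSeries betac (- v).
Proof.
unfold PSeries. apply Series_ext. intros n. unfold bs.
replace (- v) with (-1 * v) by ring. rewrite Rpow_mult_distr. ring.
Qed.

Lemma acoef_bd j n : Rabs (acoef j n) <= 2 ^ n.
Proof.
unfold acoef. rewrite PS_incr_n_simplify.
destruct (le_lt_dec (j - 1) n) as [H|H].
- unfold bs. rewrite Rabs_mult, <- RPow_abs.
  replace (Rabs (-1)) with 1 by (rewrite Rabs_left; lra).
  rewrite pow1, Rmult_1_l.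
  apply Rle_trans with (2 ^ (n - (j - 1))). apply MC.beta_bdR.
  apply Rle_pow. lra. lia.
- unfold zero; simpl. rewrite Rabs_R0. apply pow_le; lra.
Qed.

Lemma acoef_radius j : Rbar_le (/2) (CV_radius (acoef j)).
Proof.
apply radius_bd. exists 1. intros n.
rewrite Rabs_mult, <- RPow_abs.
rewrite (Rabs_right (/2)) by lra.
apply Rle_trans with (2 ^ n * (/2) ^ n).
- apply Rmult_le_compat_r. apply pow_le; lra. apply acoef_bd.
- rewrite <- Rpow_mult_distr. replace (2 * / 2) with 1 by field. rewrite pow1. lra.
Qed.

Lemma acoef_lt j v : Rabs v < /2 -> Rbar_lt (Rabs v) (CV_radius (acoef j)).
Proof.
intros H. apply Rbar_lt_le_trans with (/2). simpl; lra. apply acoef_radius.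
Qed.

Lemma G_val j v : (1 <= j)%nat -> v <> 0 -> Rabs v < /2 -> G j v = PSeries (acoef j) v.
Proof.
intros Hj Hv Hva.
unfold G. destruct (Req_EM_T v 0) as [e|_]; [contradiction|].
unfold acoef. rewrite PSeries_incr_n, Bneg.
assert (HFB := FB (- v) ltac:(rewrite Rabs_Ropp; exact Hva)).
assert (HF : 1 - exp (- v) = v * PSeries fcoef (- v)).
{ replace (1 - exp (- v)) with (- (exp (- v) - 1)) by ring. rewrite F_val. ring. }
rewrite HF.
destruct j as [|j']; [lia|].
replace (S j' - 1)%nat with j' by lia.
assert (HF0 : PSeries fcoef (- v) <> 0).
{ intros E. rewrite E in HFB. lra. }
simpl. field_simplify_eq; [| split; assumption].
rewrite Rmult_assoc, HFB. ring.
Qed.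

Lemma loc_ball (x : R) (e : posreal) (P : R -> Prop) :
  (forall y, Rabs (y - x) < e -> P y) -> locally x P.
Proof. intros H. exists e. intros y Hy. apply H. exact Hy. Qed.

Definition Dco (j : nat) : nat -> R := PS_derive_n j (acoef j).

Lemma DG j v : (1 <= j)%nat -> v <> 0 -> Rabs v < /2 ->
  Derive_n (G j) j v = PSeries (Dco j) v.
Proof.
intros Hj Hv Hva.
assert (He : 0 < Rmin (Rabs v) (/2 - Rabs v)).
{ apply Rmin_pos. apply Rabs_pos_lt; exact Hv. lra. }
rewrite (Derive_n_ext_loc (G j) (PSeries (acoef j))).
- unfold Dco. apply Derive_n_PSeries. apply acoef_lt; exact Hva.
- apply (loc_ball v (mkposreal _ He)). simpl. intros y Hy.
  apply G_val; [exact Hj| |].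
  + intros E. subst y. rewrite Rminus_0_l, Rabs_Ropp in Hy.
    generalize (Rmin_l (Rabs v) (/2 - Rabs v)). lra.
  + generalize (Rmin_r (Rabs v) (/2 - Rabs v)).
    generalize (Rabs_triang_inv y v). intros. 
    generalize (Rabs_triang (y - v) v). replace (y - v + v) with y by ring. lra.
Qed.

Definition cco (j : nat) : nat -> R := PS_mult (Dco j) (pw j).

Lemma Dco_lt j v : Rabs v < /2 -> Rbar_lt (Rabs v) (CV_radius (Dco j)).
Proof. intros H. unfold Dco. rewrite CV_radius_derive_n. apply acoef_lt; exact H. Qed.

Lemma pw0 j : pw j 0 = 0.
Proof. rewrite MC1'. simpl stirling2. simpl INR. unfold Rdiv. ring. Qed.

Lemma gfrak_val j v : (1 <= j)%nat -> Rabs v < /2 -> gfrak j v = PSeries (cco j) v.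
Proof.
intros Hj Hva.
destruct (Req_EM_T v 0) as [E|Hv].
- subst v. rewrite PSeries_0. unfold gfrak. rewrite exp_0.
  unfold cco, PS_mult. simpl sum_f_R0. rewrite pw0. simpl. ring.
- unfold cco. rewrite PSeries_mult.
  + rewrite pw_val. unfold gfrak. rewrite DG by assumption. ring.
  + apply Dco_lt; exact Hva.
  + apply pw_radius.
Qed.

Lemma cco_radius j : Rbar_lt 0 (CV_radius (cco j)).
Proof.
apply Rbar_lt_le_trans with (/4). simpl; lra.
apply radius_bd, ex_bounded. unfold cco. apply ex_pseries_mult.
- apply Dco_lt. rewrite Rabs_right; lra.
- apply pw_radius.
Qed.

Lemma Derive_gfrak j k : (1 <= j)%nat ->
  Derive_n (gfrak j) k 0 = cco j k * INR (fact k).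
Proof.
intros Hj.
rewrite (Derive_n_ext_loc (gfrak j) (PSeries (cco j))).
- apply Derive_n_coef, cco_radius.
- assert (H2 : 0 < /2) by lra.
  apply (loc_ball 0 (mkposreal _ H2)). simpl. intros y Hy.
  apply gfrak_val; [exact Hj|]. rewrite Rminus_0_r in Hy. exact Hy.
Qed.

Definition inner (r : nat) : R :=
  sum_n (fun q =>
        (-1) ^ q / INR (S q)
        * INR (stirling2 (r + q + 1) q)
        / (INR (fact (r - q + 1)) * INR (fact (r + q + 1))))
      (S r).

Lemma betac_S r : betac (S r) = INR (fact (S (S r))) * inner r.
Proof.
unfold betac, inner. f_equal. apply sum_n_ext_loc. intros q Hq.
replace (S r + q)%nat with (r + q + 1)%nat by lia.
destruct (le_lt_dec q r) as [H|H].
- replace (S r - q)%nat with (r - q + 1)%nat by lia. reflexivity.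
- replace q with (S r) by lia. replace (S r - S r)%nat with 0%nat by lia.
  replace (r - S r + 1)%nat with 1%nat by lia. reflexivity.
Qed.

Lemma acoef_at j r : (1 <= j)%nat -> acoef j (r + j) = bs (S r).
Proof.
intros Hj. unfold acoef. rewrite PS_incr_n_simplify.
destruct (le_lt_dec (j - 1) (r + j)) as [H|H]; [|lia].
f_equal. lia.
Qed.

Lemma term_eq j k r : (1 <= j)%nat ->
  Dco j r * pw j (k - r) =
  INR (fact (S j)) *
  ((-1) ^ (S r) * INR (S r) * INR (S (S r)) * INR (fact (r + j))
    * INR (stirling2 (k - r) (S j)) / INR (fact (k - r)) * inner r).
Proof.
intros Hj. unfold Dco, PS_derive_n. rewrite acoef_at by exact Hj.
unfold bs. rewrite betac_S, MC1'.
replace (fact (S (S r))) with (S (S r) * (S r * fact r))%nat by reflexivity.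
rewrite !mult_INR.
field. split; apply INR_fact_neq_0.
Qed.

Lemma cco_eq j k : (1 <= j)%nat ->
  cco j k = INR (fact (S j)) *
  sum_n (fun r =>
    (-1) ^ (S r) * INR (S r) * INR (S (S r)) * INR (fact (r + j))
    * INR (stirling2 (k - r) (S j)) / INR (fact (k - r))
    * inner r) k.
Proof.
intros Hj. unfold cco, PS_mult. rewrite <- sum_n_Reals.
rewrite (sum_n_ext_loc _ (fun r => INR (fact (S j)) *
  ((-1) ^ (S r) * INR (S r) * INR (S (S r)) * INR (fact (r + j))
    * INR (stirling2 (k - r) (S j)) / INR (fact (k - r)) * inner r))).
- apply (sum_n_mult_l (K := R_Ring)).
- intros r Hr. apply term_eq; exact Hj.
Qed.

Theorem main (j : nat) (hj : (1 <= j)%nat) :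
  forall k : nat,
    Derive_n (gfrak j) k 0 / INR (fact k)
    = INR (fact (S j)) * Ccoef j k / INR (fact k).
Proof.
intros k. rewrite Derive_gfrak by exact hj.
rewrite cco_eq by exact hj. unfold Ccoef, inner.
set (X := sum_n _ k). field. apply INR_fact_neq_0.
Qed.


Theorem theorem8p1 (j : nat) (hj : (1 <= j)%nat) :
  forall k : nat,
    Derive_n (gfrak j) k 0 / INR (fact k)
    = INR (fact (S j)) * Ccoef j k / INR (fact k).
Proof.
  exact (main j hj).
Qed.
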